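(* Consider the multi-flow status-update queueing system described in the context, and assume that (i) there is a single server ($M=1$), (ii) the packet generation and arrival times are synchronized across the $N$ flows, and (iii) the packet service times are exponentially distributed and i.i.d. across time. Then for every realization $\mathcal{I}$ of the packet generation and arrival times, every family of time-dependent age penalty functions $p_t\in\mathcal{P}_{\text{sym}}$ ($t\ge 0$), and every causal policy $\pi\in\Pi$, $$[\{p_t(\bm{\Delta}_{\text{prmp, MAF-LGFS}}(t)), t\geq 0\}\mid\mathcal{I}] \leq_{\text{st}} [\{p_t(\bm{\Delta}_\pi(t)), t\geq 0\}\mid\mathcal{I}].$$ Equivalently, for every $\mathcal{I}$, every $p_t\in\mathcal{P}_{\text{sym}}$, and every non-decreasing functional $\phi:\mathbb{V}\to\mathbb{R}$, $$\mathbb{E}\left[\phi(\{p_t(\bm{\Delta}_{\text{prmp, MAF-LGFS}}(t)),t\geq 0\})\mid\mathcal{I}\right] = \min_{\pi\in\Pi} \mathbb{E}\left[\phi(\{p_t(\bm{\Delta}_\pi(t)),t\geq0\})\mid\mathcal{I}\right],$$ provided the expectations exist.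
   Context: System: $N$ flows of update packets are sent through a queue with $M$ servers and an infinite buffer; each packet can be assigned to any server, each server processes one packet at a time, and packet service times are i.i.d. across servers and time. The system starts at time $0$. The $i$-th packet of flow $n$ is generated at time $S_{n,i}$, arrives at the queue at time $A_{n,i}$, and is delivered to the destination of flow $n$ at time $D_{n,i}$, with $0\le S_{n,1}\le S_{n,2}\le\cdots$ and $S_{n,i}\le A_{n,i}\le D_{n,i}$. Generation and arrival times are synchronized across flows if there are (arbitrary) sequences $\{S_i\}$, $\{A_i\}$ with $S_{n,i}=S_i$, $A_{n,i}=A_i$ for all $n,i$ (out-of-order arrivals are allowed). $\mathcal{I}=\{S_i,A_i, i=1,2,\ldots\}$. The processes generating $\mathcal{I}$ and the service times are mutually independent and do not depend on the scheduling policy. For a random object $X$, $[X\mid\mathcal{I}]$ denotes a random object with the conditional distribution of $X$ given $\mathcal{I}$. A scheduling policy determines which packet each server sends over time; $\Pi$ is the set of causal policies (decisions based on the history and current state of the system). A policy is preemptive if a server may switch to another packet at any time (the preempted packet returns to the queue). Age of flow $n$ under policy $\pi$: $\Delta_n(t)=t-\max\{S_{n,i}: D_{n,i}\le t\}$; $\bm{\Delta}_\pi(t)=(\Delta_1(t),\ldots,\Delta_N(t))$. The initial age vector at $t=0^-$ is the same for all policies. The preemptive MAF-LGFS (Maximum Age First, Last Generated First Served) policy serves, among all packets of all flows, the last generated packet from the flow with the maximum age, ties broken arbitrarily. $\mathcal{P}_{\text{sym}}$ is the set of functions $p:[0,\infty)^N\to\mathbb{R}$ that are symmetric ($p(\bm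 x)=p(x_{[1]},\ldots,x_{[N]})$, where $x_{[i]}$ is the $i$-th largest component) and non-decreasing (in the componentwise order). $\mathbb{V}$ is the set of Lebesgue measurable functions $[0,\infty)\to\mathbb{R}$; a functional $\phi:\mathbb{V}\to\mathbb{R}$ is non-decreasing if $\phi(f_1)\le\phi(f_2)$ whenever $f_1(t)\le f_2(t)$ for all $t$. For random vectors, $\bm X\le_{\text{st}}\bm Y$ means $\Pr(\bm X\in\mathcal{U})\le\Pr(\bm Y\in\mathcal{U})$ for all upper sets $\mathcal{U}$ (sets with $\bm y\in\mathcal{U}$ whenever $\bm y\ge\bm x\in\mathcal{U}$); for processes, $\{X(t)\}\le_{\text{st}}\{Y(t)\}$ means $(X(t_1),\ldots,X(t_n))\le_{\text{st}}(Y(t_1),\ldots,Y(t_n))$ for all $n$ and $0\le t_1<\cdots<t_n$. *)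

(* Defs.v *)
From HB Require Import structures.
From mathcomp Require Import all_boot all_order all_algebra all_fingroup.
From mathcomp Require Import all_classical all_reals all_analysis.
Set Implicit Arguments. Unset Strict Implicit. Unset Printing Implicit Defensive.
Import Order.TTheory GRing.Theory Num.Theory.
Local Open Scope classical_set_scope.
Local Open Scope ring_scope.

(* X k = k-th inter-event time of the rate-mu exponential service clock.     *)
Definition mutually_independent (d : measure_display) (T : measurableType d)
  (R : realType) (P : probability T R) (X : nat -> T -> R) : Prop :=
  forall (F : seq nat) (B : nat -> set R), uniq F ->
    (forall k, measurable (B k)) ->
    P (\bigcap_(k in [set x | x \in F]) (X k @^-1` B k)) =
    (\prod_(k <- F) P (X k @^-1` B k))%E.

Definition iid_exponential (d : measure_display) (T : measurableType d)
  (R : realType) (P : probability T R) (mu : R) (X : nat -> T -> R) : Prop :=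
  (forall k, measurable_fun setT (X k)) /\
  mutually_independent P X /\
  (forall k (x : R), 0 <= x -> P [set w | x < X k w] = (expR (- (mu * x)))%:E).

Definition tick (T : Type) (R : realType) (X : nat -> T -> R) (w : T) (k : nat) : R :=
  \sum_(j < k.+1) X j w.

(* A (deterministic, causal, preemptive-allowed) policy chooses at time t the *)
(* packet (flow n, index i) to have in service (or None = idle), based only  *)
(* on the current time, the packets that have arrived by t (with their       *)
(* generation and arrival times) and the service-clock events strictly       *)
(* before t (which, together with the policy, determine the whole past).     *)
Definition policy (R : realType) (N : nat) :=
  R -> (nat -> option (R * R)) -> (nat -> option R) -> option ('I_N * nat).

Definition arr_hist (R : realType) (S A : nat -> R) (t : R) : nat -> option (R * R) :=
  fun i => if A i <= t then Some (S i, A i) else None.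

Definition tick_hist (T : Type) (R : realType) (X : nat -> T -> R) (w : T) (t : R)
  : nat -> option R :=
  fun j => if tick X w j < t then Some (tick X w j) else None.

Definition decision (T : Type) (R : realType) (N : nat) (X : nat -> T -> R)
  (S A : nat -> R) (pi : policy R N) (w : T) (t : R) : option ('I_N * nat) :=
  pi t (arr_hist S A t) (tick_hist X w t).

Definition deliv_at (T : Type) (R : realType) (N : nat) (X : nat -> T -> R)
  (S A : nat -> R) (pi : policy R N) (w : T) (k : nat) (D : seq ('I_N * nat))
  : option ('I_N * nat) :=
  let t := tick X w k in
  match decision X S A pi w t with
  | Some q => if (A q.2 <= t) && (q \notin D) then Some q else None
  | None => None
  end.

Fixpoint delivered (T : Type) (R : realType) (N : nat) (X : nat -> T -> R)
  (S A : nat -> R) (pi : policy R N) (w : T) (k : nat) : seq ('I_N * nat) :=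
  match k with
  | 0 => [::]
  | k'.+1 =>
      let D := delivered X S A pi w k' in
      match deliv_at X S A pi w k' D with
      | Some q => q :: D
      | None => D
      end
  end.

Definition deliv (T : Type) (R : realType) (N : nat) (X : nat -> T -> R)
  (S A : nat -> R) (pi : policy R N) (w : T) (k : nat) : option ('I_N * nat) :=
  deliv_at X S A pi w k (delivered X S A pi w k).

(* Age of flow n at time t >= 0: t - max{S_{n,i} : D_{n,i} <= t}, where the *)
(* initial age D0 n is accounted for by a fictitious update generated at -D0 n. *)
Definition age (T : Type) (R : realType) (N : nat) (X : nat -> T -> R)
  (S A : nat -> R) (D0 : 'I_N -> R) (pi : policy R N) (w : T) (t : R)
  (n : 'I_N) : R :=
  t - sup [set u | u = - D0 n \/
                   exists k i, tick X w k <= t /\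
                     deliv X S A pi w k = Some (n, i) /\ u = S i].

(* state just before the k-th clock event *)
Definition in_queue (T : Type) (R : realType) (N : nat) (X : nat -> T -> R)
  (S A : nat -> R) (pi : policy R N) (w : T) (k : nat) (q : 'I_N * nat) : Prop :=
  A q.2 <= tick X w k /\ q \notin delivered X S A pi w k.

Definition pre_age (T : Type) (R : realType) (N : nat) (X : nat -> T -> R)
  (S A : nat -> R) (D0 : 'I_N -> R) (pi : policy R N) (w : T) (k : nat)
  (n : 'I_N) : R :=
  tick X w k - sup [set u | u = - D0 n \/
                     exists i, (n, i) \in delivered X S A pi w k /\ u = S i].

Definition prmp_MAF_LGFS (T : Type) (R : realType) (N : nat) (X : nat -> T -> R)
  (S A : nat -> R) (D0 : 'I_N -> R) (pi : policy R N) : Prop :=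
  forall w, (forall j, 0 < X j w) -> forall k,
    (exists q, in_queue X S A pi w k q) ->
    exists n i,
      decision X S A pi w (tick X w k) = Some (n, i) /\
      in_queue X S A pi w k (n, i) /\
      (forall m j, in_queue X S A pi w k (m, j) ->
         pre_age X S A D0 pi w k m <= pre_age X S A D0 pi w k n) /\
      (forall j, in_queue X S A pi w k (n, j) -> S j <= S i).

Definition P_sym (R : realType) (N : nat) (p : ('I_N -> R) -> R) : Prop :=
  (forall (s : {perm 'I_N}) (x : 'I_N -> R),
     (forall n, 0 <= x n) -> p (fun n => x (s n)) = p x) /\
  (forall x y : 'I_N -> R, (forall n, 0 <= x n) ->
     (forall n, x n <= y n) -> p x <= p y).

Definition upper_set (R : realType) (n : nat) (U : set ('I_n -> R)) : Prop :=
  forall x y, U x -> (forall j, x j <= y j) -> U y.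

Definition st_le_proc (d : measure_display) (T : measurableType d) (R : realType)
  (P : probability T R) (Y Z : T -> R -> R) : Prop :=
  forall (n : nat) (ts : 'I_n -> R),
    (forall j, 0 <= ts j) ->
    (forall j j' : 'I_n, (j < j')%N -> ts j < ts j') ->
    forall U : set ('I_n -> R), upper_set U ->
      measurable [set w | U (fun j => Y w (ts j))] ->
      measurable [set w | U (fun j => Z w (ts j))] ->
      (P [set w | U (fun j => Y w (ts j))] <= P [set w | U (fun j => Z w (ts j))])%E.

Definition penalty_proc (T : Type) (R : realType) (N : nat) (X : nat -> T -> R)
  (S A : nat -> R) (D0 : 'I_N -> R) (p : R -> ('I_N -> R) -> R)
  (pi : policy R N) : T -> R -> R :=
  fun w t => p t (age X S A D0 pi w t).

(* Main.v *)
Require Import Defs.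
From HB Require Import structures.
From mathcomp Require Import all_boot all_order all_algebra all_fingroup.
From mathcomp Require Import all_classical all_reals all_analysis.
Import Order.TTheory GRing.Theory Num.Theory.
Local Open Scope classical_set_scope.
Local Open Scope ring_scope.
Set Implicit Arguments. Unset Strict Implicit.

Lemma sup_max_eq (R : realType) (E : set R) x :
  E x -> (forall y, E y -> y <= x) -> sup E = x.
Proof.
move=> Ex ub; apply/le_anti/andP; split.
  by apply: ge_sup; [exists x | exact: ub].
apply: sup_upper_bound => //; split; [by exists x | by exists x].
Qed.

Section Det.
Variables (R : realType) (N : nat) (T : Type) (X : nat -> T -> R)
  (S A : nat -> R) (D0 : 'I_N -> R) (w : T).
Hypothesis Xpos : forall j, 0 < X j w.
Implicit Types pi : policy R N.

Lemma tickS k : tick X w k.+1 = tick X w k + X k.+1 w.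
Proof. by rewrite /tick big_ord_recr. Qed.

Lemma tick_lt k l : (k < l)%N -> tick X w k < tick X w l.
Proof.
elim: l => // l IH; rewrite ltnS leq_eqVlt => /orP[/eqP->|kl].
  by rewrite tickS ltrDl.
by rewrite (lt_trans (IH kl)) // tickS ltrDl.
Qed.

Lemma tick_le k l : (k <= l)%N -> tick X w k <= tick X w l.
Proof. by rewrite leq_eqVlt => /orP[/eqP->//|/tick_lt/ltW]. Qed.

Lemma deliveredS pi k : delivered X S A pi w k.+1 =
  match deliv X S A pi w k with Some q => q :: delivered X S A pi w k
  | None => delivered X S A pi w k end.
Proof. by []. Qed.

Lemma in_delivered pi k q : q \in delivered X S A pi w k ->
  exists2 j, (j < k)%N & deliv X S A pi w j = Some q.
Proof.
elim: k => // k IH; rewrite deliveredS.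
case E: deliv => [q'|]; last by move/IH => [j jk ?]; exists j => //; exact: ltnW.
rewrite in_cons => /orP[/eqP->|/IH [j jk ?]]; first by exists k.
by exists j => //; exact: ltnW.
Qed.

Lemma deliv_delivered pi k K q : (k < K)%N -> deliv X S A pi w k = Some q ->
  q \in delivered X S A pi w K.
Proof.
elim: K => // K IH; rewrite ltnS leq_eqVlt => /orP[/eqP->|kK] E.
  by rewrite deliveredS E mem_head.
rewrite deliveredS; case: deliv => [q'|]; last exact: IH.
by rewrite in_cons IH // orbT.
Qed.

Lemma deliv_inq pi k q : deliv X S A pi w k = Some q -> in_queue X S A pi w k q.
Proof.
rewrite /deliv /deliv_at; case: decision => [q'|] //.
by case: ifP => // /andP[h1 h2] [<-].
Qed.

Lemma inq_deliv pi k q : decision X S A pi w (tick X w k) = Some q ->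
  in_queue X S A pi w k q -> deliv X S A pi w k = Some q.
Proof.
by rewrite /deliv /deliv_at => -> [h1 h2]; rewrite h1 h2.
Qed.

Variable t : R.

Fixpoint fresh (pi : policy R N) (K : nat) (n : 'I_N) : R :=
  match K with
  | 0 => - D0 n
  | K'.+1 => if tick X w K' <= t then
      match deliv X S A pi w K' with
      | Some q => if q.1 == n then Num.max (fresh pi K' n) (S q.2) else fresh pi K' n
      | None => fresh pi K' n end
    else fresh pi K' n
  end.

Lemma fresh_mono pi K n : fresh pi K n <= fresh pi K.+1 n.
Proof.
rewrite /=; case: ifP => // _; case: deliv => // q; case: ifP => // _.
by rewrite le_max lexx.
Qed.

Lemma fresh_monoK pi K K' n : (K <= K')%N -> fresh pi K n <= fresh pi K' n.
Proof.
elim: K' => [|K' IH]; first by rewrite leqn0 => /eqP->.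
rewrite leq_eqVlt => /orP[/eqP->//|]; rewrite ltnS => /IH h.
exact: le_trans h (fresh_mono _ _ _).
Qed.

Lemma fresh_ge0 pi K n : - D0 n <= fresh pi K n.
Proof. exact: (fresh_monoK pi n (leq0n K)). Qed.

Lemma fresh_ub pi K n k i : (k < K)%N -> tick X w k <= t ->
  deliv X S A pi w k = Some (n, i) -> S i <= fresh pi K n.
Proof.
move=> kK tk E; apply: le_trans (fresh_monoK pi n kK).
by rewrite /= tk E eqxx le_max lexx orbT.
Qed.

Lemma fresh_mem pi K n : fresh pi K n = - D0 n \/
  exists k i, [/\ (k < K)%N, tick X w k <= t, deliv X S A pi w k = Some (n, i)
     & fresh pi K n = S i].
Proof.
elim: K => [|K [IH|[k [i [h1 h2 h3 h4]]]]]; first by left.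
- rewrite /=; case: ifP => tk; last by left.
  case E: deliv => [[n' i']|]; last by left.
  case: eqP => /= [en|]; last by left.
  rewrite -en; case: (leP (fresh pi K n') (S i')) => _; last by rewrite en; left.
  by right; exists K, i'; rewrite en ltnSn tk -en E.
- have Hk : (k < K.+1)%N by exact: ltnW.
  rewrite /=; case: ifP => tk; last by right; exists k, i.
  case E: deliv => [[n' i']|]; last by right; exists k, i.
  case: eqP => /= [en|]; last by right; exists k, i.
  rewrite -en; case: (leP (fresh pi K n') (S i')) => _.
    by right; exists K, i'; rewrite en ltnSn tk -en E.
  by rewrite en; right; exists k, i.
Qed.

Lemma fresh_stepB pi K n : (forall q, deliv X S A pi w K = Some q -> q.1 != n) ->
  fresh pi K.+1 n = fresh pi K n.
Proof.
move=> h /=; case: ifP => // _; case E: deliv => [q|] //.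
by rewrite (negbTE (h q E)).
Qed.

Lemma fresh_stepS pi K n i : tick X w K <= t -> deliv X S A pi w K = Some (n, i) ->
  fresh pi K.+1 n = Num.max (fresh pi K n) (S i).
Proof. by move=> tk E /=; rewrite tk E eqxx. Qed.

Lemma pre_sup pi K n : tick X w K <= t ->
  sup [set u | u = - D0 n \/
    exists i, (n, i) \in delivered X S A pi w K /\ u = S i] = fresh pi K n.
Proof.
move=> tK; apply: sup_max_eq.
  case: (fresh_mem pi K n) => [->|[k [i [h1 h2 h3 ->]]]]; first by left.
  by right; exists i; split => //; exact: deliv_delivered h3.
move=> y [->|[i [/in_delivered [k kK E] ->]]]; first exact: fresh_ge0.
apply: fresh_ub (kK) _ E; apply: le_trans tK; apply: tick_le; exact: ltnW.
Qed.

End Det.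
Section Inv.
Variables (R : realType) (N : nat) (T : Type) (X : nat -> T -> R)
  (S A : nat -> R) (D0 : 'I_N -> R) (w : T) (t : R).
Hypothesis Xpos : forall j, 0 < X j w.
Hypothesis S0 : forall i, 0 <= S i.
Hypothesis D00 : forall n, 0 <= D0 n.
Implicit Types pi : policy R N.
Local Notation fr := (fresh X S A D0 w t).
Local Notation tk := (tick X w).
Local Notation inq := (in_queue X S A _ w).

Lemma not_inq_fresh pi K x i : tk K <= t -> A i <= tk K ->
  ~ in_queue X S A pi w K (x, i) -> S i <= fr pi K x.
Proof.
move=> tK Ai nq; case: (boolP ((x, i) \in delivered X S A pi w K)) => [|nd]; last first.
  by exfalso; apply: nq; split.
move=> H; have [k kK E] := in_delivered H; apply: (fresh_ub D0 kK) _ E.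
by apply: le_trans tK; apply: (tick_le Xpos); exact: ltnW.
Qed.

Lemma fresh_arr pi K n : tk K <= t ->
  fr pi K n <= 0 \/ exists i, A i <= tk K /\ fr pi K n = S i.
Proof.
move=> tK; case: (fresh_mem X S A D0 w t pi K n) => [->|[k [i [kK tk' E ->]]]].
  by left; rewrite oppr_le0.
right; exists i; split => //; have [h _] := deliv_inq E.
by apply: le_trans h _; apply: (tick_le Xpos); exact: ltnW.
Qed.

Lemma invariant piA piB : prmp_MAF_LGFS X S A D0 piA ->
  forall K, exists s : {perm 'I_N}, forall n, fr piB K n <= fr piA K (s n).
Proof.
move=> MAF; elim=> [|K [s IH]]; first by exists 1%g => n; rewrite perm1.
have [tK|tK] := leP (tk K) t; last first.
  exists s => n; rewrite /= !ifN ?IH //; by rewrite -ltNge.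
case EB: (deliv X S A piB w K) => [[j i]|]; last first.
  exists s => n; rewrite (fresh_stepB D0 t (pi:=piB) (K:=K)); last by move=> q; rewrite EB.
  exact: le_trans (IH n) (fresh_mono _ _ _ _ _ _ _ _ _).
have [Aj nDj] := deliv_inq EB.
have fB' : forall n, n != j -> fr piB K.+1 n = fr piB K n.
  by move=> n nj; rewrite (fresh_stepB D0 t (pi:=piB) (K:=K)) // => q; rewrite EB => -[<-]; rewrite eq_sym.
have fBj : fr piB K.+1 j = Num.max (fr piB K j) (S i) by exact: fresh_stepS.
have monoA : forall n, fr piA K n <= fr piA K.+1 n by move=> n; exact: fresh_mono.
have [[q Hq]|noq] := pselect (exists q, in_queue X S A piA w K q); last first.
  case EA: (deliv X S A piA w K) => [q|].
    by exfalso; apply: noq; exists q; exact: deliv_inq EA.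
  exists s => n; case: (eqVneq n j) => [->|nj].
    rewrite fBj ge_max (le_trans (IH j) (monoA _)) /=; apply: le_trans (monoA _); apply: not_inq_fresh => //.
    by move=> h; apply: noq; exists (s j, i).
  by rewrite fB' //; exact: le_trans (IH n) (monoA _).
have [m [i0 [Hdec [Hinq [Hmax Hlgfs]]]]] := MAF w Xpos K (ex_intro _ q Hq).
have EA := inq_deliv Hdec Hinq.
have fAm : fr piA K.+1 m = Num.max (fr piA K m) (S i0) by exact: fresh_stepS.
have claim1 : forall i', A i' <= tk K -> S i' <= Num.max (fr piA K m) (S i0).
  move=> i' Ai'; have [Hq'|nq'] := pselect (in_queue X S A piA w K (m, i')).
    by rewrite le_max (Hlgfs _ Hq') orbT.
  by rewrite le_max not_inq_fresh.
have claim1' : fr piB K j <= Num.max (fr piA K m) (S i0).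
  case: (@fresh_arr piB K j tK) => [h|[i' [Ai' ->]]]; last exact: claim1.
  by apply: le_trans h _; rewrite le_max S0 orbT.
have pa : forall n, pre_age X S A D0 piA w K n = tk K - fr piA K n.
  by move=> n; rewrite /pre_age (pre_sup S A D0 Xpos piA n tK).
have claim2 : forall x, fr piA K m <= fr piA K x.
  move=> x; have [[jx Hx]|nx] := pselect (exists jx, in_queue X S A piA w K (x, jx)).
    by have := Hmax x jx Hx; rewrite !pa lerD2l lerN2.
  have nx' : forall i', ~ in_queue X S A piA w K (x, i') by move=> i' h; apply: nx; exists i'.
  case: (@fresh_arr piA K m tK) => [h|[i' [Ai' ->]]]; last exact: not_inq_fresh.
  apply: le_trans h _; apply: le_trans (S0 i0) _; apply: not_inq_fresh => //.
  by case: Hinq.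
exists (tperm j (s^-1 m) * s)%g => n; rewrite permM.
case: (eqVneq n j) => [->|nj].
  by rewrite tpermL permKV fBj fAm ge_max claim1' claim1.
case: (eqVneq n (s^-1 m)%g) => [En|nn0].
  rewrite En tpermR fB'; last by rewrite -En.
  apply: le_trans (IH _) _; rewrite permKV; apply: le_trans (claim2 (s j)) _.
  exact: monoA.
have -> : tperm j (s^-1 m)%g n = n by apply: tpermD; rewrite eq_sym.
rewrite fB' //; exact: le_trans (IH n) (monoA _).
Qed.
End Inv.
Section Age.
Variables (R : realType) (N : nat) (T : Type) (X : nat -> T -> R)
  (S A : nat -> R) (D0 : 'I_N -> R) (w : T) (t : R).
Hypothesis Xpos : forall j, 0 < X j w.
Hypothesis S0 : forall i, 0 <= S i /\ S i <= A i.
Hypothesis D00 : forall n, 0 <= D0 n.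
Hypothesis t0 : 0 <= t.
Implicit Types pi : policy R N.
Local Notation fr := (fresh X S A D0 w t).

Definition AgeSet pi n := [set u : R | u = - D0 n \/
  exists k i, tick X w k <= t /\ deliv X S A pi w k = Some (n, i) /\ u = S i].

Lemma ageset_ub pi n u : AgeSet pi n u -> u <= t.
Proof.
move=> [->|[k [i [tk [E ->]]]]]; first by apply: le_trans t0; rewrite oppr_le0.
have [h _] := deliv_inq E; apply: le_trans tk; apply: le_trans h; exact: (S0 i).2.
Qed.

Lemma has_sup_age pi n : has_sup (AgeSet pi n).
Proof. by split; [exists (- D0 n); left | exists t => u /ageset_ub]. Qed.

Lemma fresh_le_sup pi K n : fr pi K n <= sup (AgeSet pi n).
Proof.
apply: sup_upper_bound; first exact: has_sup_age.
case: (fresh_mem X S A D0 w t pi K n) => [->|[k [i [_ tk E ->]]]]; first by left.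
by right; exists k, i.
Qed.

Lemma sup_le_t pi n : sup (AgeSet pi n) <= t.
Proof. by apply: ge_sup; [exists (- D0 n); left | move=> u /ageset_ub]. Qed.

Lemma sup_cmp piA piB :
  (forall K, exists s : {perm 'I_N}, forall n, fr piB K n <= fr piA K (s n)) ->
  exists s : {perm 'I_N}, forall n, sup (AgeSet piB n) <= sup (AgeSet piA (s n)).
Proof.
move=> inv.
have [s good] : exists s : {perm 'I_N}, forall K, exists2 K', (K <= K')%N &
    forall n, fr piB K' n <= fr piA K' (s n).
  apply: contrapT => H.
  have H' : forall s : {perm 'I_N}, exists K, forall K', (K <= K')%N ->
      ~ (forall n, fr piB K' n <= fr piA K' (s n)).
    move=> s; apply: contrapT => H2; apply: H; exists s => K.
    apply: contrapT => H3; apply: H2; exists K => K' KK' H4; by apply: H3; exists K'.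
  pose B s := proj1_sig (cid (H' s)).
  have [s0 Hs0] := inv (\max_(s : {perm 'I_N}) B s)%N.
  apply: (proj2_sig (cid (H' s0)) _ _ Hs0).
  by rewrite (bigD1 s0) //= leq_maxl.
exists s => n; apply: ge_sup; first by exists (- D0 n); left.
move=> u [->|[k [i [tk [E ->]]]]].
  have [K' _ HK'] := good 0%N.
  apply: le_trans (fresh_ge0 X S A D0 w t piB K' n) _.
  exact: le_trans (HK' n) (fresh_le_sup _ _ _).
have [K' kK' HK'] := good k.+1.
apply: le_trans (fresh_ub D0 kK' tk E) _.
exact: le_trans (HK' n) (fresh_le_sup _ _ _).
Qed.

Lemma age_eq pi n : age X S A D0 pi w t n = t - sup (AgeSet pi n).
Proof. by []. Qed.

Lemma path_le (p : ('I_N -> R) -> R) piA piB :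
  prmp_MAF_LGFS X S A D0 piA -> P_sym p ->
  p (age X S A D0 piA w t) <= p (age X S A D0 piB w t).
Proof.
move=> MAF [Psym Pmon].
have S0' : forall i, 0 <= S i by move=> i; exact: (S0 i).1.
have [s Hs] := sup_cmp (invariant t Xpos S0' D00 piB MAF).
have nn : forall n, 0 <= age X S A D0 piA w t n.
  by move=> n; rewrite age_eq subr_ge0 sup_le_t.
rewrite -(Psym s _ nn); apply: Pmon; first by move=> n; exact: nn.
by move=> n; rewrite !age_eq lerD2l lerN2.
Qed.
End Age.

Unset Implicit Arguments.

Theorem theorem1 (R : realType) (d : measure_display) (T : measurableType d)
  (P : probability T R) (mu : R) (X : nat -> T -> R)
  (N : nat) (S A : nat -> R) (D0 : 'I_N -> R)
  (p : R -> ('I_N -> R) -> R) (piMAF pi : policy R N) :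
  0 < mu ->
  iid_exponential P mu X ->
  (forall i j, (i <= j)%N -> S i <= S j) ->
  (forall i, 0 <= S i /\ S i <= A i) ->
  (forall n, 0 <= D0 n) ->
  (forall t, 0 <= t -> P_sym (p t)) ->
  prmp_MAF_LGFS X S A D0 piMAF ->
  st_le_proc P (penalty_proc X S A D0 p piMAF) (penalty_proc X S A D0 p pi).
Proof.
move=> mu0 [mX [indep expo]] Smono SA D0pos Psym MAF.
move=> n ts ts0 tsinc U upU mY mZ.
pose F k := [set w | X k w <= 0].
have mF' : forall k, measurable [set w | 0 < X k w].
  move=> k; have := mX k measurableT _ (measurable_itv `]0, +oo[%O).
  by rewrite setTI; congr measurable; apply/seteqP; split => x /=; rewrite in_itv /= andbT.
have FC : forall k, F k = ~` [set w | 0 < X k w].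
  move=> k; apply/seteqP; split => x /= h; first by rewrite ltNge h.
  by rewrite /F /= leNgt; apply/negP.
have negF : forall k, P.-negligible (F k).
  move=> k; exists (F k); split => //; first by rewrite FC; exact: measurableC.
  rewrite FC probability_setC // expo // mulr0 oppr0 expR0 subee //.
have [M [mM PM0 GM]] := negligible_bigcup negF.
apply: (@le_trans _ _ (P ([set w | U (fun j => penalty_proc X S A D0 p pi w (ts j))] `|` M))).
  apply: le_measure; rewrite ?inE //; first exact: measurableU.
  move=> w Uw; have [Mw|nMw] := pselect (M w); first by right.
  left; have Xp : forall j, 0 < X j w.
    move=> j; rewrite ltNge; apply/negP => h; apply: nMw; apply: GM; by exists j.
  apply: (upU _ _ Uw) => j; rewrite /penalty_proc.
  exact: (path_le Xp SA D0pos (ts0 j) pi MAF (Psym _ (ts0 j))).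
apply: le_trans (measureU2 _ mZ mM) _.
rewrite -[leRHS]adde0; apply: leeD2l.
by rewrite le_eqVlt; apply/orP; left; apply/eqP; exact: PM0.
Qed.
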